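(* Consider the two-link parallel network with unit demand and latencies $\ell_1(x_1)=x_1^2$ and $\ell_2(x_2)=0$. Then there is no uncapped subgame perfect Nash equilibrium, i.e. $\mathcal{T}(\infty)=\emptyset$, and moreover $\mathcal{T}(c)=\emptyset$ for every price cap $c\ge\frac12$.
   Context: Flows $x\in\mathbb{R}^2_+$ with $x_1+x_2=1$. For tolls $t\in\mathbb{R}^2_+$, $x(t)$ is the unique Wardrop equilibrium for $t$ (for all $i,j$ with $x_i>0$: $\ell_i(x_i)+t_i\le\ell_j(x_j)+t_j$). Profit $\Pi_i(t)=t_ix_i(t)$. For $c\in\mathbb{R}_+$, $\mathcal{T}(c)$ is the set of toll vectors with $0\le t_i\le c$ such that for every $i$ and every $t'_i\in[0,c]$, $\Pi_i(t_i,t_{-i})\ge\Pi_i(t'_i,t_{-i})$ (flow recomputed); $\mathcal{T}(\infty)$ is the same without upper bound. *)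

(* Defs.v *)
From Stdlib Require Import Reals Lra.
Open Scope R_scope.

Definition lat1 (y : R) : R := y ^ 2.
Definition lat2 (y : R) : R := 0.

(* Wardrop equilibrium for tolls t: x in R^2_+, x1 + x2 = 1, and every
   used link has minimal latency-plus-toll (cases i = j are trivial). *)
Definition wardrop (t x : R * R) : Prop :=
  0 <= fst x /\ 0 <= snd x /\ fst x + snd x = 1 /\
  (0 < fst x -> lat1 (fst x) + fst t <= lat2 (snd x) + snd t) /\
  (0 < snd x -> lat2 (snd x) + snd t <= lat1 (fst x) + fst t).

Definition profit1 (xf : R * R -> R * R) (t : R * R) : R := fst t * fst (xf t).
Definition profit2 (xf : R * R -> R * R) (t : R * R) : R := snd t * snd (xf t).

Definition capped (c : R) (s : R) : Prop := 0 <= s <= c.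
Definition uncapped (s : R) : Prop := 0 <= s.

Definition in_T (xf : R * R -> R * R) (adm : R -> Prop) (t : R * R) : Prop :=
  adm (fst t) /\ adm (snd t) /\
  (forall t1', adm t1' -> profit1 xf (t1', snd t) <= profit1 xf t) /\
  (forall t2', adm t2' -> profit2 xf (fst t, t2') <= profit2 xf t).

(* Main.v *)
Require Import Defs.
From Stdlib Require Import Reals Lra Psatz.
Open Scope R_scope.

Lemma ward_unf t X : wardrop t X ->
  0 <= fst X /\ 0 <= snd X /\ fst X + snd X = 1 /\
  (0 < fst X -> fst X * fst X + fst t <= snd t) /\
  (0 < snd X -> snd t <= fst X * fst X + fst t).
Proof. unfold wardrop, lat1, lat2. intros (A&B&C&D&E). repeat split; auto; intros; [specialize (D H)|specialize (E H)]; nra. Qed.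

Lemma ward_int t X : wardrop t X -> 0 < snd t - fst t < 1 ->
  fst X * fst X = snd t - fst t /\ 0 < fst X /\ 0 < snd X.
Proof.
  intros W H. apply ward_unf in W. destruct W as (A&B&C&D&E).
  assert (h1 : 0 < fst X).
  { destruct (Rle_lt_dec (fst X) 0); auto. assert (snd X = 1) by lra.
    assert (snd t <= fst X * fst X + fst t) by (apply E; lra). nra. }
  assert (h2 : 0 < snd X).
  { destruct (Rle_lt_dec (snd X) 0); auto. assert (fst X = 1) by lra.
    specialize (D h1). nra. }
  specialize (D h1); specialize (E h2). repeat split; lra.
Qed.

Lemma gen (xf : R * R -> R * R) (adm : R -> Prop) :
  (forall t : R * R, 0 <= fst t -> 0 <= snd t -> wardrop t (xf t)) ->
  (forall s, adm s -> 0 <= s) ->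
  (forall s u, 0 <= s -> s <= u -> adm u -> adm s) ->
  (forall s, 0 <= s <= 1/2 -> adm s) ->
  forall t, ~ in_T xf adm t.
Proof.
  intros HW H0 Hd Hh [t1 t2] (A1 & A2 & F1 & F2). simpl in *.
  unfold profit1, profit2 in *. simpl in *.
  pose proof (H0 _ A1) as p1. pose proof (H0 _ A2) as p2.
  destruct (ward_unf _ _ (HW (t1,t2) p1 p2)) as (X1&X2&XS&XD&XE). simpl in *.
  set (x := fst (xf (t1,t2))) in *. set (x2 := snd (xf (t1,t2))) in *.
  assert (q2 : 0 < t2).
  { destruct (Rle_lt_dec t2 0) as [h|h]; auto. exfalso.
    assert (t2 = 0) by lra.
    assert (ad : adm (1/2)) by (apply Hh; lra).
    specialize (F2 _ ad).
    destruct (ward_unf _ _ (HW (t1,1/2) p1 ltac:(simpl; lra))) as (Y1&Y2&YS&YD&YE).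
    simpl in *.
    destruct (Rle_lt_dec (snd (xf (t1, 1/2))) 0).
    - assert (fst (xf (t1,1/2)) = 1) by lra. specialize (YD ltac:(lra)). nra.
    - subst t2. nra. }
  assert (q1 : 0 < t1 * x).
  { assert (ad : adm (t2/2)) by (apply (Hd _ t2); auto; lra).
    specialize (F1 _ ad).
    destruct (ward_unf _ _ (HW (t2/2,t2) ltac:(simpl; lra) p2)) as (Y1&Y2&YS&YD&YE).
    simpl in *.
    destruct (Rle_lt_dec (fst (xf (t2/2, t2))) 0).
    - assert (snd (xf (t2/2,t2)) = 1) by lra. specialize (YE ltac:(lra)). nra.
    - nra. }
  assert (qt1 : 0 < t1) by (destruct (Rle_lt_dec t1 0); nra).
  assert (qx : 0 < x) by (destruct (Rle_lt_dec x 0); nra).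
  specialize (XD qx).
  (* step 3: undercut *)
  assert (U : t1 <= t2 * x2).
  { destruct (Rle_lt_dec t1 (t2 * x2)) as [h|h]; auto. exfalso.
    set (p := (t2 * x2 + t1)/2).
    assert (pp : 0 <= p) by (unfold p; nra).
    assert (ad : adm p) by (apply (Hd _ t1); auto; unfold p; lra).
    specialize (F2 _ ad).
    destruct (ward_unf _ _ (HW (t1,p) p1 pp)) as (Y1&Y2&YS&YD&YE). simpl in *.
    destruct (Rle_lt_dec (fst (xf (t1, p))) 0).
    - assert (snd (xf (t1,p)) = 1) by lra. unfold p in *; nra.
    - specialize (YD ltac:(lra)). unfold p in *; nra. }
  assert (qx2 : 0 < x2) by (destruct (Rle_lt_dec x2 0); nra).
  specialize (XE qx2).
  assert (Et2 : t2 = t1 + x * x) by lra.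
  assert (Ua : t1 <= x - x * x).
  { rewrite Et2 in U. replace x2 with (1 - x) in U by lra.
    assert (t1 * x <= x * (x - x*x)) by nra. nra. }
  set (s := 9 * x / 10).
  set (t1' := t2 - s * s).
  assert (L4 : s * (x + s) <= t1).
  { assert (pt : 0 <= t1') by (unfold t1', s; nra).
    assert (ad : adm t1') by (apply (Hd _ t2); auto; unfold t1', s; nra).
    specialize (F1 _ ad).
    destruct (ward_int (t1',t2) _ (HW (t1',t2) pt p2)) as (Z1&Z2&Z3);
      simpl; unfold t1', s; try nra.
    simpl in *.
    assert (fst (xf (t1',t2)) = s).
    { assert (t2 - t1' = s * s) by (unfold t1'; ring).
      assert (0 < s) by (unfold s; lra). nra. }
    rewrite H in F1. unfold t1' in F1.
    assert ((x - s) * (t1 - s * (x + s)) >= 0) by nra.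
    assert (0 < x - s) by (unfold s; lra).
    destruct (Rle_lt_dec (s * (x + s)) t1) as [hh|hh]; auto.
    assert ((x - s) * (t1 - s * (x + s)) < 0) by (apply Rmult_pos_neg; lra). lra. }
  assert (xs : x <= 10/27).
  { unfold s in L4. nra. }
  (* step 5: firm 2 raise *)
  set (d := (1 - 2 * x) * (1/2 - t2) / 2).
  assert (t2h : t2 < 1/2) by nra.
  assert (dp : 0 < d) by (unfold d; nra).
  assert (d1 : d <= (1 - 2*x)/4) by (unfold d; nra).
  assert (d2 : d <= (1/2 - t2)/2) by (unfold d; nra).
  set (y := x + d).
  set (p := t1 + y * y).
  assert (pp : 0 <= p) by (unfold p; nra).
  assert (ph : p <= 1/2) by (unfold p, y; nra).
  assert (ad : adm p) by (apply Hh; lra).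
  specialize (F2 _ ad).
  destruct (ward_int (t1,p) _ (HW (t1,p) p1 pp)) as (Z1&Z2&Z3);
    simpl; unfold p, y; try nra.
  simpl in *.
  assert (fst (xf (t1,p)) = y).
  { assert (p - t1 = y * y) by (unfold p; ring).
    assert (0 < y) by (unfold y; lra). nra. }
  destruct (ward_unf _ _ (HW (t1,p) p1 pp)) as (Y1&Y2&YS&_&_). simpl in *.
  assert (snd (xf (t1,p)) = 1 - y) by lra.
  rewrite H1 in F2. replace x2 with (1 - x) in F2 by lra.
  unfold p in F2. rewrite Et2 in F2.
  assert (E5 : (y - x) * (x + y - x*x - x*y - y*y - t1) <= 0) by nra.
  assert (0 < y - x) by (unfold y; lra).
  assert (x + y - x*x - x*y - y*y - t1 <= 0) by nra.
  assert (y * (1 - x - y) <= 0) by nra.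
  assert (0 < 1 - x - y) by (unfold y; lra).
  assert (0 < y) by (unfold y; lra). nra.
Qed.

Theorem mainTheorem15 :
  forall xf : R * R -> R * R,
    (forall t : R * R, 0 <= fst t -> 0 <= snd t -> wardrop t (xf t)) ->
    (forall t : R * R, ~ in_T xf uncapped t) /\
    (forall c : R, 1 / 2 <= c -> forall t : R * R, ~ in_T xf (capped c) t).
Proof.
  intros xf HW. split.
  - apply gen; auto; unfold uncapped; intros; lra.
  - intros c hc. apply gen; auto; unfold capped; intros; lra.
Qed.
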